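(* For every integer $r \geq 3$ and every positive integer $n$, $$g'(r,n)\geq \frac{2n}{r+1}-\frac{\binom{2r}{r}}{r+1}.$$
   Context: A hypergraph is $r$-uniform if every edge contains exactly $r$ vertices. A matching is a set of pairwise vertex-disjoint edges. Given a collection (family, repetitions allowed) of matchings $M_1,\dots,M_n$ in a hypergraph (not necessarily disjoint from one another), a matching $M\subseteq \bigcup_{i=1}^n M_i$ is called rainbow if there is an injection $\phi:M\to[n]$ such that every edge $e\in M$ belongs to $M_{\phi(e)}$. $g'(r,n)$ denotes the largest integer $s$ such that every collection of $n$ matchings, each of size $n$, in an $r$-uniform hypergraph admits a rainbow matching of size $s$. *)

(* Defs.v *)
From mathcomp Require Import all_boot all_order all_algebra.
Set Implicit Arguments. Unset Strict Implicit. Unset Printing Implicit Defensive.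

Definition uniform (V : finType) (r : nat) (E : {set {set V}}) : Prop :=
  forall e, e \in E -> #|e| = r.

Definition matching (V : finType) (M : {set {set V}}) : Prop :=
  forall e f, e \in M -> f \in M -> e != f -> [disjoint e & f].

Definition rainbow_matching (V : finType) (n : nat)
    (F : 'I_n -> {set {set V}}) (M : {set {set V}}) : Prop :=
  matching M /\ M \subset \bigcup_(i < n) F i /\
  exists phi : {set V} -> 'I_n,
    {in M &, injective phi} /\ (forall e, e \in M -> e \in F (phi e)).

(* Main.v *)
Require Import Defs.
From mathcomp Require Import all_boot all_order all_algebra.
From mathcomp Require Import zify.
From Stdlib Require Import Classical.
Import Order.TTheory GRing.Theory Num.Theory.
Set Implicit Arguments. Unset Strict Implicit. Unset Printing Implicit Defensive.

Definition rb (V : finType) (n : nat) (F : 'I_n -> {set {set V}})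
  (M : {set {set V}}) (phi : {set V} -> 'I_n) : Prop :=
  matching M /\ {in M &, injective phi} /\ (forall e, e \in M -> e \in F (phi e)).

Lemma rb_rainbow V n F M phi : @rb V n F M phi -> rainbow_matching F M.
Proof.
move=> [mM [iM fM]]; split=> //; split; last by exists phi.
apply/subsetP=> e eM; apply/bigcupP; exists (phi e) => //; exact: fM.
Qed.

Lemma rb_del V n F M phi e : @rb V n F M phi -> rb F (M :\ e) phi.
Proof.
move=> [mM [iM fM]]; split; last split.
- by move=> a b; rewrite !inE => /andP[_ aM] /andP[_ bM]; apply: mM.
- by move=> a b; rewrite !inE => /andP[_ aM] /andP[_ bM]; apply: iM.
- by move=> a; rewrite !inE => /andP[_ aM]; apply: fM.
Qed.

Lemma rb_add V n F M phi (j : 'I_n) (f : {set V}) :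
  @rb V n F M phi -> (forall e, e \in M -> phi e != j) -> f \in F j ->
  f \notin M -> (forall e, e \in M -> [disjoint f & e]) ->
  rb F (f |: M) (fun e => if e == f then j else phi e).
Proof.
move=> [mM [iM fM]] nj fF fnM dis; split; last split.
- move=> a b; rewrite !inE => /orP[/eqP->|aM] /orP[/eqP->|bM]; rewrite ?eqxx //.
  + by move=> _; apply: dis.
  + by move=> _; rewrite disjoint_sym; apply: dis.
  + by apply: mM.
- move=> a b; rewrite !inE => /orP[/eqP->|aM] /orP[/eqP->|bM]; rewrite ?eqxx //.
  + have -> : (b == f) = false by apply/negbTE; apply: contraNneq fnM => <-.
    by move=> ej; move: (nj b bM); rewrite -ej eqxx.
  + have -> : (a == f) = false by apply/negbTE; apply: contraNneq fnM => <-.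
    by move=> ej; move: (nj a aM); rewrite ej eqxx.
  + have -> : (a == f) = false by apply/negbTE; apply: contraNneq fnM => <-.
    have -> : (b == f) = false by apply/negbTE; apply: contraNneq fnM => <-.
    by apply: iM.
- move=> a; rewrite !inE => /orP[/eqP->|aM]; first by rewrite eqxx.
  have -> : (a == f) = false by apply/negbTE; apply: contraNneq fnM => <-.
  exact: fM.
Qed.

Lemma exists_max V n F (n0 : 0 < n) :
  exists M phi, @rb V n F M phi /\
    forall M' phi', rb F M' phi' -> #|M'| <= #|M|.
Proof.
pose P k := exists M phi, @rb V n F M phi /\ #|M| = k.
suff [k [[M [phi [hM hk]]] mx]] : exists k, P k /\ forall k', P k' -> k' <= k.
  exists M, phi; split=> // M' phi' h'; rewrite hk; apply: mx; by exists M', phi'.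
have P0 : P 0.
  exists set0, (fun _ => Ordinal n0); split; last by rewrite cards0.
  by split; [move=> a b; rewrite inE|split; [move=> a b; rewrite inE|move=> a; rewrite inE]].
have bnd k : P k -> k <= #|{set V}|.
  by move=> [M [phi [_ <-]]]; apply: max_card.
suff H : forall m, (forall k, P k -> k <= m) -> exists k, P k /\ forall k', P k' -> k' <= k.
  exact: (H _ bnd).
elim=> [|m IH] hm.
  by exists 0; split=> // k' /hm; rewrite leqn0 => /eqP->.
case: (classic (forall k, P k -> k <= m)) => [h|h]; first exact: IH.
have [k [Pk km]] : exists k, P k /\ ~ k <= m.
  apply: NNPP => nx; apply: h => k Pk; apply: NNPP => nk; apply: nx; by exists k.
exists k; split=> // k' /hm; move/negP: km; rewrite -ltnNge => mk k'm.
exact: leq_trans k'm mk.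
Qed.

Lemma sum_disj (T : finType) (P : {set {set T}}) (A : {set T}) :
  matching P -> \sum_(f in P) #|f :&: A| <= #|A|.
Proof.
move=> mP.
have -> : \sum_(f in P) #|f :&: A| = \sum_(f in P) \sum_(x in A) (x \in f : nat).
  apply: eq_bigr => f _; rewrite -sum1_card big_mkcond [RHS]big_mkcond /=.
  by apply: eq_bigr => x _; rewrite inE andbC; case: (x \in A); case: (x \in f).
rewrite exchange_big /= -sum1_card; apply: leq_sum => x xA.
rewrite -big_mkcondr /= sum1_card.
apply/card_le1_eqP => f g; rewrite [f \in _]unfold_in [g \in _]unfold_in /= => /andP[fP xf] /andP[gP xg].
apply/eqP; apply: contraTT isT; rewrite eq_sym => nfg.
have := mP f g fP gP nfg; move/disjoint_setI0/setP/(_ x).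
by rewrite !inE xf xg.
Qed.

Lemma card_bigcup_leq (T I : finType) (D : {pred I}) (G : I -> {set T}) :
  #|\bigcup_(i in D) G i| <= \sum_(i in D) #|G i|.
Proof.
apply: (big_ind2 (fun (A : {set T}) m => #|A| <= m)).
- by rewrite cards0.
- move=> A a B b hA hB; rewrite cardsU.
  apply: leq_trans (leq_subr _ _) _; exact: leq_add.
- by [].
Qed.

Lemma sum_bool_card (I : finType) (D : {pred I}) (b : pred I) :
  \sum_(i in D) (b i : nat) = #|[set i in D | b i]|.
Proof.
rewrite -sum1_card big_mkcond /= [RHS]big_mkcond /=.
by apply: eq_bigr => i _; rewrite inE; case: (i \in D); case: (b i).
Qed.

Section Bol.
Local Open Scope ring_scope.
Definition wt (a b : nat) : rat := ('C(a + b, a)%:R)^-1.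

Lemma wt_le1 a b : wt a b <= 1.
Proof.
rewrite /wt invf_le1 ?ltr0n ?bin_gt0 ?leq_addr // ler1n bin_gt0 leq_addr //.
Qed.

Lemma wt_ge0 a b : 0 <= wt a b.
Proof. by rewrite /wt invr_ge0 ler0n. Qed.

Lemma wt_step a b : (0 < b)%N -> b%:R * wt a b.-1 = (a + b)%:R * wt a b.
Proof.
move=> b0; rewrite /wt.
have h := mul_bin_down (a + b) a.
have e1 : (a + b).-1 = a + b.-1 by case: b b0 {h} => // b _; rewrite addnS.
rewrite e1 addKn in h.
have c1 : ('C(a + b.-1, a)%:R : rat) != 0 by rewrite pnatr_eq0 -lt0n bin_gt0 leq_addr.
have c2 : ('C(a + b, a)%:R : rat) != 0 by rewrite pnatr_eq0 -lt0n bin_gt0 leq_addr.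
by apply/eqP; rewrite eqr_div // -!natrM -h mulnC.
Qed.

Lemma bol_single (T I : finType) (S : {set I}) (A B : I -> {set T}) i0 :
  i0 \in S -> B i0 = set0 ->
  (forall i j, i \in S -> j \in S -> i != j -> A i :&: B j != set0) ->
  \sum_(i in S) wt #|A i| #|B i| <= 1.
Proof.
move=> Si0 B0 cross.
have -> : S = [set i0].
  apply/setP=> j; rewrite inE; apply/idP/eqP => [Sj|->//].
  apply/eqP/negPn/negP => nj.
  by move: (cross j i0 Sj Si0 nj); rewrite B0 setI0 eqxx.
by rewrite big_set1 wt_le1.
Qed.

Lemma bollobas (T I : finType) (N : nat) : forall (X : {set T}) (S : {set I})
  (A B : I -> {set T}),
  #|X| = N ->
  (forall i, i \in S -> A i \subset X) -> (forall i, i \in S -> B i \subset X) ->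
  (forall i, i \in S -> [disjoint A i & B i]) ->
  (forall i j, i \in S -> j \in S -> i != j -> A i :&: B j != set0) ->
  \sum_(i in S) wt #|A i| #|B i| <= 1.
Proof.
elim: N => [|N IH] X S A B cX sA sB dAB cross.
  case: (set_0Vmem S) => [->|[i0 Si0]]; first by rewrite big_set0.
  apply: (bol_single Si0 _ cross).
  apply/eqP; rewrite -subset0; move/eqP: cX; rewrite cards_eq0 => /eqP <-.
  exact: sB.
case: (boolP [exists i in S, B i == set0]) => [/existsP[i0 /andP[Si0 /eqP B0]]|].
  exact: (bol_single Si0 B0 cross).
rewrite negb_exists => /forallP nB.
have bpos i : i \in S -> (0 < #|B i|)%N.
  by move=> Si; move: (nB i); rewrite Si /= lt0n cards_eq0.
have hx x : x \in X -> \sum_(i in S | x \notin A i) wt #|A i| #|B i :\ x| <= 1.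
  move=> Xx.
  have := IH (X :\ x) [set i in S | x \notin A i] A (fun i => B i :\ x).
  rewrite (eq_bigl (fun i => (i \in S) && (x \notin A i))); last by move=> i; rewrite inE.
  apply.
  - by move: cX; rewrite (cardsD1 x) Xx => -[].
  - by move=> i; rewrite inE => /andP[Si xA]; rewrite subsetD1 sA.
  - by move=> i; rewrite inE => /andP[Si xA]; apply: setSD; apply: sB.
  - move=> i; rewrite inE => /andP[Si xA]; apply: (disjointWr _ (dAB i Si)).
    exact: subD1set.
  - move=> i j; rewrite !inE => /andP[Si xAi] /andP[Sj xAj] nij.
    case/set0Pn: (cross i j Si Sj nij) => y; rewrite inE => /andP[yA yB].
    apply/set0Pn; exists y; rewrite !inE yA yB andbT.
    by apply: contraNneq xAi => <-.
have hi i : i \in S -> \sum_(x in X | x \notin A i) wt #|A i| #|B i :\ x|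
                     = N.+1%:R * wt #|A i| #|B i|.
  move=> Si.
  rewrite (bigID (fun x => x \in B i)) /=.
  rewrite (eq_bigr (fun _ => wt #|A i| #|B i|.-1)); last first.
    by move=> x /andP[/andP[_ _] xB]; rewrite (cardsD1 x (B i)) xB.
  rewrite [X in _ + X](eq_bigr (fun _ => wt #|A i| #|B i|)); last first.
    by move=> x /andP[/andP[_ _] xB]; rewrite (cardsD1 x (B i)) (negbTE xB).
  rewrite (eq_bigl (mem (B i))); last first.
    move=> x /=; apply/idP/idP => [/andP[]//|xB].
    rewrite xB andbT (subsetP (sB i Si)) //=.
    apply: contraTN xB => xA; have /setP/(_ x) := disjoint_setI0 (dAB i Si).
    by rewrite !inE xA /= => ->.
  rewrite [X in _ + X](eq_bigl (mem (X :\: (A i :|: B i)))); last first.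
    move=> x; rewrite !inE negb_or.
    by case: (x \in X); case: (x \in A i); case: (x \in B i).
  rewrite !sumr_const.
  have cc : (#|X :\: (A i :|: B i)| + (#|A i| + #|B i|) = N.+1)%N.
    rewrite -cX -(cardsID (A i :|: B i) X) addnC.
    have -> : X :&: (A i :|: B i) = A i :|: B i.
      by apply/setIidPr; rewrite subUset sA ?sB.
    by rewrite cardsU (disjoint_setI0 (dAB i Si)) cards0 subn0.
  rewrite -(mulr_natl (wt _ _.-1)) -(mulr_natl (wt _ #|B i|)) wt_step ?bpos //.
  by rewrite -mulrDl -natrD addnC cc.
have tot : \sum_(x in X) \sum_(i in S | x \notin A i) wt #|A i| #|B i :\ x| <= N.+1%:R.
  rewrite -cX -sumr_const; apply: ler_sum => x Xx; exact: hx.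
have ex : \sum_(x in X) \sum_(i in S | x \notin A i) wt #|A i| #|B i :\ x|
        = \sum_(i in S) \sum_(x in X | x \notin A i) wt #|A i| #|B i :\ x|.
  rewrite (eq_bigr (fun x => \sum_(i in S) (if x \notin A i then wt #|A i| #|B i :\ x| else 0))); last first.
    by move=> x _; rewrite big_mkcondr.
  rewrite exchange_big /=; apply: eq_bigr => i _.
  by rewrite big_mkcondr.
rewrite ex (eq_bigr (fun i => N.+1%:R * wt #|A i| #|B i|)) in tot; last first.
  by move=> i Si; rewrite hi.
rewrite -mulr_sumr -[X in _ <= X]mulr1 in tot.
by rewrite -(ler_pM2l (ltr0Sn _ N)).
Qed.

End Bol.

Lemma arith (u s n r C T Bs : nat) : 3 <= r ->
  u * (2 * n) <= u * (r * s) + Bs ->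
  Bs <= s * u + (r - 1) * T ->
  2 * T <= s * C -> u + s = n -> 2 * n <= (r + 1) * s + C.
Proof.
move=> hr h1 h2 h3 h4.
have h3' : (r - 1) * (2 * T) <= (r - 1) * (s * C) by rewrite leq_mul2l h3 orbT.
have key : 2 * u * (2 * n) <= 2 * u * (r * s) + 2 * s * u + (r - 1) * s * C by nia.
rewrite leqNgt; apply/negP => neg.
have e1 : 2 * u * ((r + 1) * s + C + 1) <= 2 * u * (2 * n) by rewrite leq_mul2l addn1 neg orbT.
have e2 : ((r - 1) * s + C + 1) * (C + 1) <= 2 * u * (C + 1) by rewrite leq_mul2r; apply/orP; right; lia.
nia.
Qed.

Theorem theorem1p6 (r n : nat) (hr : 3 <= r) (hn : 0 < n)
    (V : finType) (F : 'I_n -> {set {set V}})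
    (hunif : forall i, uniform r (F i))
    (hmatch : forall i, matching (F i))
    (hsize : forall i, #|F i| = n) :
  exists M : {set {set V}}, rainbow_matching F M /\
    ((2 * n)%:R / (r + 1)%:R - ('C(2 * r, r))%:R / (r + 1)%:R
       <= (#|M|%:R : rat))%R.
Proof.
have r0 : 0 < r by apply: leq_trans hr.
have fne : forall i f, f \in F i -> f != set0.
  by move=> i f fF; rewrite -cards_eq0 (hunif i f fF) -lt0n.
have [M [phi [rbM mx]]] := exists_max F hn.
have [mM [iM fM]] := rbM.
pose VM := \bigcup_(e in M) e.
have eVM : forall e, e \in M -> e \subset VM by move=> e eM; apply: bigcup_sup.
pose Used := [set phi e | e in M].
have cUsed : #|Used| = #|M| := card_in_imset iM.
pose U := ~: Used.
have cU : #|U| + #|M| = n by rewrite -cUsed addnC cardsC card_ord.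
have unused : forall j, j \in U -> forall e, e \in M -> phi e != j.
  move=> j; rewrite inE => jU e eM; by apply: contraNneq jU => <-; apply: imset_f.
have cVM : #|VM| <= r * #|M|.
  apply: leq_trans (card_bigcup_leq _ _) _.
  rewrite (eq_bigr (fun _ => r)); first by rewrite sum_nat_const mulnC.
  move=> x xM; exact: hunif (fM x xM).
have meet : forall j f, j \in U -> f \in F j -> f :&: VM != set0.
  move=> j f jU fF; apply/negP => /eqP f0.
  have fnM : f \notin M.
    apply: contraNN (fne _ _ fF) => fM'.
    have <- : f :&: VM = f by apply/setIidPl; apply: eVM.
    by rewrite f0.
  have dis : forall e, e \in M -> [disjoint f & e].
    move=> e eM; rewrite -setI_eq0 -subset0 -f0; apply: setIS; exact: eVM.
  have := mx _ _ (rb_add rbM (unused j jU) fF fnM dis).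
  by rewrite cardsU1 fnM add1n ltnn.
pose P (j : 'I_n) (e : {set V}) := [set f in F j | (f :&: VM \subset e) && (f :&: e != set0)].
have pdis : forall e e' f : {set V}, e \in M -> e' \in M -> e' != e -> f :&: VM \subset e ->
    [disjoint f & e'].
  move=> e e' f eM e'M ne sub; rewrite -setI_eq0 -subset0.
  have h : f :&: e' \subset e :&: e'.
    apply/subsetP => x; rewrite !inE => /andP[xf xe']; rewrite xe' andbT.
    apply: (subsetP sub); rewrite inE xf; exact: (subsetP (eVM e' e'M)).
  by rewrite (disjoint_setI0 (mM e e' eM e'M _)) // eq_sym in h.
have cross : forall j k e f g, j \in U -> k \in U -> j != k -> e \in M ->
    f \in P j e -> g \in P k e -> f :&: g != set0.
  move=> j k e f g jU kU jk eM; rewrite !inE => /andP[fF /andP[fsub _]] /andP[gF /andP[gsub _]].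
  apply/negP => /eqP fg0.
  have rbM1 := rb_del e rbM.
  have gdis : forall e', e' \in M :\ e -> [disjoint g & e'].
    by move=> e'; rewrite !inE => /andP[ne e'M]; apply: (pdis e).
  have gnM1 : g \notin M :\ e.
    apply/negP => gM1; have := gdis g gM1; rewrite -setI_eq0 setIid.
    by apply/negP; apply: fne gF.
  have un1 : forall e', e' \in M :\ e -> phi e' != k.
    by move=> e'; rewrite inE => /andP[_ e'M]; apply: unused.
  have rb2 := rb_add rbM1 un1 gF gnM1 gdis.
  have un2 : forall e', e' \in g |: (M :\ e) ->
      (fun e0 => if e0 == g then k else phi e0) e' != j.
    move=> e'; rewrite !inE /=; case: (e' == g) => /=; first by move=> _; rewrite eq_sym.
    by move=> /andP[_ e'M]; apply: unused.
  have fdis : forall e', e' \in g |: (M :\ e) -> [disjoint f & e'].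
    move=> e'; rewrite !inE => /orP[/eqP->|/andP[ne e'M]].
      by rewrite -setI_eq0 fg0.
    exact: (pdis e).
  have fnM2 : f \notin g |: (M :\ e).
    apply/negP => fM2; have := fdis f fM2; rewrite -setI_eq0 setIid.
    by apply/negP; apply: fne fF.
  have := mx _ _ (rb_add rb2 un2 fF fnM2 fdis).
  rewrite cardsU1 fnM2 cardsU1 gnM1 (cardsD1 e M) eM /=.
  lia.
pose b j := #|[set f in F j | [exists e in M, f \in P j e]]|.
have lowE : forall j, j \in U -> 2 * n <= r * #|M| + b j.
  move=> j jU.
  have pw : forall f, f \in F j ->
      2 <= #|f :&: VM| + ([exists e in M, f \in P j e] : nat).
    move=> f fF.
    case/set0Pn: (meet j f jU fF) => x; rewrite inE => /andP[xf /bigcupP[e eM xe]].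
    case: (boolP (f :&: VM \subset e)) => sub.
      have -> : [exists e in M, f \in P j e].
        apply/existsP; exists e; rewrite eM !inE fF sub /=.
        by apply/set0Pn; exists x; rewrite inE xf xe.
      rewrite addn1 ltnS card_gt0; apply/set0Pn; exists x; rewrite inE xf.
      by apply/bigcupP; exists e.
    case/subsetPn: sub => y; rewrite inE => /andP[yf yVM] ye.
    have xy : x != y by apply: contraNneq ye => <-.
    apply: leq_trans (leq_addr _ _).
    have <- : #|[set x; y]| = 2 by rewrite cards2 xy.
    apply: subset_leq_card; apply/subsetP => z; rewrite !inE => /orP[]/eqP->.
      by rewrite xf; apply/bigcupP; exists e.
    by rewrite yf.
  have s1 : 2 * n = \sum_(f in F j) 2 by rewrite sum_nat_const hsize mulnC.
  rewrite s1; apply: (@leq_trans (\sum_(f in F j) (#|f :&: VM| + ([exists e in M, f \in P j e] : nat)))).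
    by apply: leq_sum.
  rewrite big_split /=; apply: leq_add.
    apply: leq_trans (sum_disj _ (hmatch j)) cVM.
  by rewrite sum_bool_card /b; apply: subset_leq_card; apply/subsetP => f; rewrite !inE.
have upF : forall j, b j <= \sum_(e in M) #|P j e|.
  move=> j; apply: leq_trans (card_bigcup_leq _ _).
  apply: subset_leq_card; apply/subsetP => f; rewrite inE => /andP[_ /existsP[e /andP[eM fP]]].
  by apply/bigcupP; exists e.
have upG : forall j e, e \in M -> #|P j e| <= r.
  move=> j e eM.
  have mP : matching (P j e).
    by move=> a c; rewrite /P !inE => /andP[aF _] /andP[cF _]; apply: (hmatch j a c aF cF).
  have := sum_disj e mP; rewrite (hunif _ e (fM e eM)) => h.
  apply: leq_trans h; rewrite -sum1_card; apply: leq_sum => f.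
  by rewrite /P inE => /andP[_ /andP[_ ne]]; rewrite card_gt0.
pose J2 e := [set j in U | 1 < #|P j e|].
have upH : forall e, e \in M -> \sum_(j in U) #|P j e| <= #|U| + (r - 1) * #|J2 e|.
  move=> e eM.
  apply: (@leq_trans (\sum_(j in U) (1 + (r - 1) * (1 < #|P j e| : nat)))).
    apply: leq_sum => j _; have hh := upG j e eM; case: (ltnP 1 #|P j e|) => h /=.
      by rewrite muln1 add1n subn1 prednK.
    by rewrite muln0 addn0.
  rewrite big_split /= sum1_card -big_distrr /= sum_bool_card.
  by rewrite leq_add2l.
have upI : forall e, e \in M -> 2 * #|J2 e| <= 'C(2 * r, r).
  move=> e eM.
  pose f1 j := odflt set0 [pick f in P j e].
  pose f2 j := odflt set0 [pick f in P j e :\ f1 j].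
  have hf : forall j, j \in J2 e -> [/\ f1 j \in P j e, f2 j \in P j e & f1 j != f2 j].
    move=> j; rewrite /J2 inE => /andP[jU h2].
    rewrite /f2 /f1; case: pickP => [a aP | none] /=; last first.
      by move: h2; rewrite (eq_card0 none).
    case: pickP => [c cP | none] /=; last first.
      by move: h2; rewrite (cardsD1 a) aP (eq_card0 none).
    move: cP; rewrite in_setD1 => /andP[ca cP]; split => //; by rewrite eq_sym.
  pose S := setX (J2 e) [set: bool].
  pose A := fun p : 'I_n * bool => if p.2 then f1 p.1 else f2 p.1.
  pose B := fun p : 'I_n * bool => if p.2 then f2 p.1 else f1 p.1.
  have inS : forall p, p \in S -> p.1 \in J2 e.
    by move=> [j c]; rewrite /S in_setX => /andP[].
  have hAB : forall p, p \in S -> [/\ A p \in P p.1 e, B p \in P p.1 e & A p != B p].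
    move=> [j c] /inS /= /hf [h1 h2 h3]; rewrite /A /B; case: c => //=; split=> //.
    by rewrite eq_sym.
  have PF : forall j f, f \in P j e -> f \in F j.
    by move=> j f; rewrite /P inE => /andP[].
  have PU : forall j, j \in J2 e -> j \in U.
    by move=> j; rewrite /J2 inE => /andP[].
  have bol : (\sum_(p in S) wt #|A p| #|B p| <= 1)%R.
    apply: (@bollobas V _ _ [set: V] S A B (erefl _)).
    - by move=> p _; apply: subsetT.
    - by move=> p _; apply: subsetT.
    - move=> [j c] pS; have [a b0 ab] := hAB _ pS.
      exact: (hmatch j _ _ (PF _ _ a) (PF _ _ b0) ab).
    - move=> [j c] [k d] pS qS pq.
      case: (eqVneq j k) => [ejk|njk].
        subst k; have cd : c != d by apply: contraNneq pq => ->.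
        have [h1 h2 _] := hf j (inS _ pS).
        rewrite /A /B /=; case: c d cd {pq pS qS} => [] [] //= _; rewrite setIid.
          exact: (fne j _ (PF _ _ h1)).
        exact: (fne j _ (PF _ _ h2)).
      have [a _ _] := hAB _ pS; have [_ b' _] := hAB _ qS.
      exact: (cross j k e _ _ (PU j (inS _ pS)) (PU k (inS _ qS)) njk eM a b').
  rewrite (eq_bigr (fun _ => wt r r)) in bol; last first.
    move=> p pS; have [a b' _] := hAB _ pS.
    by rewrite (hunif _ _ (PF _ _ a)) (hunif _ _ (PF _ _ b')).
  rewrite sumr_const /S cardsX cardsT card_bool -(mulr_natl (wt r r)) /wt in bol.
  rewrite -[X in (X <= _)%R]/(((#|J2 e| * 2)%:R / ('C(r + r, r))%:R)%R : rat) in bol.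
  rewrite ler_pdivrMr ?mul1r ?ltr0n ?bin_gt0 ?leq_addr // ler_nat in bol.
  by rewrite mulnC mul2n -addnn.
exists M; split; first exact: rb_rainbow rbM.
pose T := \sum_(e in M) #|J2 e|.
pose Bs := \sum_(j in U) b j.
have h1 : #|U| * (2 * n) <= #|U| * (r * #|M|) + Bs.
  rewrite -!sum_nat_const /Bs -big_split /=; apply: leq_sum => j jU; exact: lowE.
have h2 : Bs <= #|M| * #|U| + (r - 1) * T.
  apply: (@leq_trans (\sum_(j in U) \sum_(e in M) #|P j e|)).
    by apply: leq_sum => j _; exact: upF.
  rewrite exchange_big /=.
  apply: (@leq_trans (\sum_(e in M) (#|U| + (r - 1) * #|J2 e|))).
    by apply: leq_sum => e eM; exact: upH.
  by rewrite big_split /= sum_nat_const /T big_distrr.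
have h3 : 2 * T <= #|M| * 'C(2 * r, r).
  rewrite /T big_distrr /= -sum_nat_const; apply: leq_sum => e eM; exact: upI.
have fin := arith hr h1 h2 h3 cU.
rewrite -mulrBl ler_pdivrMr; last by rewrite ltr0n addn1.
rewrite lerBlDr -natrM -natrD ler_nat.
by rewrite [_ * (r + 1)]mulnC.
Qed.
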